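(* Let $p\ge5$ be prime, $G=\mathrm{GL}_2(\mathbb{F}_p)$, and $H\subset G$ a subgroup isomorphic to the dicyclic group $\mathrm{Dic}_{12}\simeq C_3\rtimes C_4$ of order 12. Then $$N_G(H)/C(G)\simeq \mathrm{Aut}(H)\simeq D_6,$$ the first isomorphism being induced by conjugation. Moreover: (a) if $(3/p)=1$, every matrix in $N_G(H)$ has square determinant; (b) if $(3/p)=-1$, the matrices in $N_G(H)$ with square determinant are exactly those inducing inner automorphisms of $H$.
   Context: $N_G(H)$ is the normalizer of $H$ in $G$, $C(G)$ the center of $G$, $D_6$ the dihedral group of order 12, and $(\cdot/p)$ the Legendre symbol. *)

(* Defs.v *)
From HB Require Import structures.
From mathcomp Require Import all_boot all_order all_algebra all_fingroup all_solvable all_field.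
Set Implicit Arguments. Unset Strict Implicit. Unset Printing Implicit Defensive.
Import GRing.Theory.
Local Open Scope ring_scope.

Definition legendre (p a : nat) : int :=
  if (p %| a)%N then 0%R
  else if [exists y : 'F_p, (y ^+ 2 == a%:R)%R] then 1%R else (-1)%R.

Definition sq_det (p : nat) (g : {'GL_2['F_p]}) : Prop :=
  exists y : 'F_p, \det (GLval g) = (y ^+ 2)%R.

Definition induces_inner (gT : finGroupType) (H : {group gT}) (x : gT) : Prop :=
  exists2 h, h \in H & {in H, forall y, (y ^ x = y ^ h)%g}.

(* Main.v *)
Require Import Defs.
From HB Require Import structures.
From mathcomp Require Import all_boot all_order all_algebra all_fingroup all_solvable all_field.
From mathcomp Require Import ring zify.
From Stdlib Require Import Classical.
Import GRing.Theory.
Local Open Scope group_scope.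

Set Implicit Arguments. Unset Strict Implicit. Unset Printing Implicit Defensive.

Section Mat2.
Local Open Scope ring_scope.
Variable F : fieldType.
Implicit Types M N : 'M[F]_2.

Lemma mx2_eq M N : M 0 0 = N 0 0 -> M 0 1 = N 0 1 -> M 1 0 = N 1 0 -> M 1 1 = N 1 1 -> M = N.
Proof.
move=> h00 h01 h10 h11; apply/matrixP=> i j.
have [->|->] : i = 0 \/ i = 1 by case: i => [[|[|//]] Hi]; [left|right]; apply: val_inj.
all: have [->|->] : j = 0 \/ j = 1 by case: j => [[|[|//]] Hj]; [left|right]; apply: val_inj.
all: done.
Qed.
Lemma lift01 : lift ord0 ord0 = 1 :> 'I_2. Proof. exact: val_inj. Qed.
Lemma lift10 : lift 1 0 = 0 :> 'I_2. Proof. exact: val_inj. Qed.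
Lemma ord00 : ord0 = 0 :> 'I_2. Proof. exact: val_inj. Qed.
Lemma mulmx2E M N i j : (M *m N) i j = M i 0 * N 0 j + M i 1 * N 1 j.
Proof. by rewrite mxE !big_ord_recl big_ord0 addr0 lift01 ord00. Qed.

Definition is_scal M := exists c, M = c%:M.

Lemma solve1 (a b c : F) : a != 0 -> a * b = c -> b = c / a.
Proof. by move=> a0 <-; field. Qed.
Lemma eq_from (x y l r : F) : l = r -> x - y = l - r -> x = y.
Proof. by move=> ->; rewrite subrr => /eqP; rewrite subr_eq0 => /eqP. Qed.
Lemma mulIf0 (x y : F) : y != 0 -> x * y = 0 -> x = 0.
Proof. by move=> y0 /eqP; rewrite mulf_eq0 (negbTE y0) orbF => /eqP. Qed.

Lemma comm_scal M N : ~ is_scal M -> M *m N = N *m M ->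
  exists a b, N = a%:M + b *: M.
Proof.
move=> nsM cMN.
have e (i j : 'I_2) := congr1 (fun X : 'M[F]_2 => X i j) cMN.
move: (e 0 0) (e 0 1) (e 1 0) => /=; rewrite !mulmx2E => E00 E01 E10.
have h1 : M 0 1 * N 1 0 = N 0 1 * M 1 0 by apply: (eq_from E00); ring.
have h2 : M 0 1 * (N 1 1 - N 0 0) = N 0 1 * (M 1 1 - M 0 0) by apply: (eq_from E01); ring.
have h3 : M 1 0 * (N 0 0 - N 1 1) = N 1 0 * (M 0 0 - M 1 1) by apply: (eq_from E10); ring.
have [m01_0|m01n] := eqVneq (M 0 1) 0.
  rewrite m01_0 mul0r in h1; rewrite m01_0 mul0r in h2.
  have [m10_0|m10n] := eqVneq (M 1 0) 0.
    rewrite m10_0 mul0r in h3.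
    have [md0|mdn] := eqVneq (M 0 0 - M 1 1) 0.
      case: nsM; exists (M 0 0); apply: mx2_eq; rewrite !mxE /= ?m01_0 ?m10_0 //.
      by move/eqP: md0; rewrite subr_eq0 => /eqP ->.
    have mdn' : M 1 1 - M 0 0 != 0 by rewrite -opprB oppr_eq0.
    have n01 : N 0 1 = 0 by apply: (mulIf0 mdn'); exact: (esym h2).
    have n10 : N 1 0 = 0 by apply: (mulIf0 mdn); exact: (esym h3).
    exists (N 0 0 - (N 0 0 - N 1 1) / (M 0 0 - M 1 1) * M 0 0).
    exists ((N 0 0 - N 1 1) / (M 0 0 - M 1 1)).
    apply: mx2_eq; rewrite !mxE /= ?m01_0 ?m10_0 ?n01 ?n10; by field.
  have n01 : N 0 1 = 0 by apply: (mulIf0 m10n); exact: (esym h1).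
  have n11 : N 1 1 = N 0 0 - N 1 0 * (M 0 0 - M 1 1) / M 1 0
    by rewrite -(solve1 m10n h3); ring.
  exists (N 0 0 - N 1 0 / M 1 0 * M 0 0); exists (N 1 0 / M 1 0).
  apply: mx2_eq; rewrite !mxE /= ?m01_0 ?n01 ?n11; by field.
have n10 : N 1 0 = N 0 1 * M 1 0 / M 0 1 by apply: solve1.
have n11 : N 1 1 = N 0 0 + N 0 1 * (M 1 1 - M 0 0) / M 0 1
  by rewrite -(solve1 m01n h2); ring.
exists (N 0 0 - N 0 1 / M 0 1 * M 0 0); exists (N 0 1 / M 0 1).
apply: mx2_eq; rewrite !mxE /= ?n10 ?n11; by field.
Qed.

Lemma det2E M : \det M = M 0 0 * M 1 1 - M 0 1 * M 1 0.
Proof.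
rewrite (expand_det_row M 0) !big_ord_recl big_ord0 addr0 /cofactor !det_mx11 !mxE lift01 ord00 lift10.
by rewrite /= expr0 expr1 mul1r mulN1r mulrN.
Qed.

Lemma trace2E M : \tr M = M 0 0 + M 1 1.
Proof. by rewrite /mxtrace !big_ord_recl big_ord0 addr0 lift01 ord00. Qed.

Lemma CH2 M : M * M = \tr M *: M - (\det M)%:M.
Proof.
apply: mx2_eq; rewrite !mulmx2E !mxE /= det2E trace2E; ring.
Qed.

Lemma scalP (M N : 'M[F]_2) : is_scal M -> M * N = N * M.
Proof. by case=> c ->; rewrite /GRing.mul /= scalar_mxC. Qed.

Lemma nonscal_lin M (u v : F) : ~ is_scal M -> u *: M = v%:M -> u = 0 /\ v = 0.
Proof.
move=> nsM h; have [u0|un] := eqVneq u 0.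
  split=> //; move: h; rewrite u0 scale0r => /(congr1 (fun X : 'M[F]_2 => X 0 0)).
  by rewrite !mxE /= mulr1n.
case: nsM; exists (v / u); apply: (scalerI un); rewrite h.
apply: mx2_eq; rewrite !mxE /=; by field.
Qed.

Lemma comm_via C X Y : ~ is_scal C -> C * X = X * C -> C * Y = Y * C -> X * Y = Y * X.
Proof.
move=> nsC cX cY.
have [a [b ->]] := comm_scal nsC cX.
have [a' [b' ->]] := comm_scal nsC cY.
apply: mx2_eq; rewrite !mulmx2E !mxE /=; ring.
Qed.

Lemma scal_mxE (c : F) : (c%:M : 'M[F]_2) 0 0 = c.
Proof. by rewrite mxE /= mulr1n. Qed.

Lemma CHlin M u v : ~ is_scal M -> M * M = u *: M + v%:M -> \tr M = u /\ \det M = - v.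
Proof.
move=> nsM; rewrite CH2 => e.
have e' : (\tr M - u) *: M = (\det M + v)%:M.
  have f (i j : 'I_2) := congr1 (fun X : 'M[F]_2 => X i j) e.
  move: (f 0 0) (f 0 1) (f 1 0) (f 1 1) => /=; rewrite !mxE /= => f00 f01 f10 f11.
  by apply: mx2_eq; rewrite !mxE /=; [apply: (eq_from f00)|apply: (eq_from f01)|apply: (eq_from f10)|apply: (eq_from f11)]; ring.
have [/eqP h1 /eqP h2] := nonscal_lin nsM e'.
by move: h1 h2; rewrite subr_eq0 addr_eq0 => /eqP -> /eqP ->.
Qed.

Lemma auxXB (P Q : 'M[F]_2) : Q + 2%:R *: (- P - Q) + (Q + 2%:R *: P) = 0.
Proof. apply: mx2_eq; rewrite !mxE /=; ring. Qed.

Section Dic.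
Variables (A Ai B : 'M[F]_2).
Hypotheses (hAAi : A * Ai = 1) (hAiA : Ai * A = 1) (hAB : A * B = B * Ai)
  (hAiB : Ai * B = B * A) (hA3 : A ^+ 3 = 1) (hB4 : B ^+ 4 = 1)
  (hB2 : B ^+ 2 != 1) (nAB : A * B != B * A).

Lemma nscalA : ~ is_scal A.
Proof. by move=> sA; move: nAB; rewrite (scalP B sA) eqxx. Qed.

Lemma nscalB : ~ is_scal B.
Proof. by move=> sB; move: nAB; rewrite (scalP A sB) eqxx. Qed.

Lemma scal_comm_AB N : N * A = A * N -> N * B = B * N -> is_scal N.
Proof.
move=> cA cB.
have [a [b hN]] := comm_scal nscalA (esym cA).
have [b0|bn] := eqVneq b 0.
  by exists a; rewrite hN b0 scale0r addr0.
exfalso; move: cB; rewrite hN -scalemx1 mulrDl mulrDr -scalerAl -scalerAr -scalerAl -scalerAr.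
rewrite mul1r mulr1 => /addrI /(scalerI bn) eAB.
by move: nAB; rewrite eAB eqxx.
Qed.

Lemma BB : B * B = (-1)%:M.
Proof.
have cC : (B * B) * A = A * (B * B).
  by rewrite -mulrA -hAiB mulrA -hAB mulrA.
have [[s hs]|nsC] := classic (is_scal (B * B)); last first.
  by move: nAB; rewrite (comm_via nsC cC (esym (mulrA B B B))) eqxx.
have s2 : s * s = 1.
  have e : (B ^+ 4) 0 0 = s * s by rewrite (exprD B 2 2) expr2 hs mulmx2E !mxE /=; ring.
  by rewrite -e hB4 mxE.
have s1 : s != 1 by apply: contra hB2; rewrite expr2 hs => /eqP ->.
rewrite hs; congr (_%:M).
have : (s - 1) * (s + 1) = 0 by rewrite mulrDr mulr1 mulrBl s2 mul1r; ring.
move/eqP; rewrite mulf_eq0 subr_eq0 (negbTE s1) /= addr_eq0 => /eqP //.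
Qed.

Lemma sumA : A + Ai = (-1)%:M.
Proof.
have cSA : (A + Ai) * A = A * (A + Ai) by rewrite mulrDl mulrDr hAiA hAAi.
have cSB : (A + Ai) * B = B * (A + Ai) by rewrite mulrDl mulrDr hAB hAiB addrC.
have [s hS] := scal_comm_AB cSA cSB.
have hP : A * A = s *: A - 1.
  apply: (canRL (addrK 1)); rewrite -hAAi -mulrDr hS -scalemx1 -scalerAr mulr1.
  done.
have e : (s * s - 1) *: A = (s + 1) *: 1.
  have := hA3; rewrite exprS expr2 hP mulrBr mulr1 -scalerAr hP => h.
  rewrite scalerBl scale1r -scalerA.
  have -> : s *: (s *: A) = s *: (s *: A - 1) + s *: 1 by rewrite -scalerDr subrK.
  by rewrite addrAC h scalerDl scale1r addrC.
have [_] := nonscal_lin nscalA (etrans e (scalemx1 _ _)).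
by rewrite hS => /eqP; rewrite addr_eq0 => /eqP ->.
Qed.

Lemma AA : A * A + A + 1 = 0.
Proof.
have : A * (A + Ai) = - A by rewrite sumA -scalemx1 -scalerAr mulr1 scaleN1r.
rewrite mulrDr hAAi => /(canRL (addrK 1)) ->.
by rewrite addrAC subrK addNr.
Qed.

Lemma AiE : Ai = - A - 1.
Proof. by apply: (canRL (addKr A)); rewrite sumA -scalemx1 scaleN1r. Qed.


Lemma trdetA : \tr A = -1 /\ \det A = 1.
Proof.
have e : A * A = (-1) *: A + (-1)%:M.
  rewrite -scalemx1 !scaleN1r; have /eqP := AA.
  by rewrite -addrA addr_eq0 => /eqP ->; rewrite opprD.
by have [-> ->] := CHlin nscalA e; rewrite opprK.
Qed.

Lemma detB : \det B = 1.
Proof.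
have e : B * B = 0 *: B + (-1)%:M by rewrite scale0r add0r BB.
by have [_ ->] := CHlin nscalB e; rewrite opprK.
Qed.


Definition Xm := 1 + 2%:R *: A.

Lemma XA : Xm * A = A * Xm.
Proof. by rewrite /Xm mulrDl mulrDr mul1r mulr1 -scalerAl -scalerAr. Qed.

Lemma XB : Xm * B = - (B * Xm).
Proof.
apply/eqP; rewrite -addr_eq0 /Xm mulrDl mulrDr mul1r mulr1 -scalerAl -scalerAr hAB.
by rewrite AiE mulrBr mulrN mulr1 auxXB.
Qed.

Lemma AAE : A * A = - A - 1.
Proof. by have /eqP := AA; rewrite -addrA addr_eq0 => /eqP ->; rewrite opprD. Qed.

Lemma XX : Xm * Xm = (- 3%:R)%:M.
Proof.
rewrite /Xm mulrDl !mulrDr !mul1r mulr1 -!scalerAl -!scalerAr scalerA AAE.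
apply: mx2_eq; rewrite !mxE /=; ring.
Qed.

Lemma detX : \det Xm = 3%:R.
Proof.
have [ht hd] := trdetA; move: ht hd; rewrite trace2E det2E => ht hd.
rewrite det2E /Xm !mxE /=.
transitivity (1 + 2%:R * (A 0 0 + A 1 1) + 4%:R * (A 0 0 * A 1 1 - A 0 1 * A 1 0)); first ring.
by rewrite ht hd; ring.
Qed.

End Dic.
End Mat2.


Lemma fixC (T : finGroupType) (x y : T) : commute x y -> x ^ y = x.
Proof. by move=> c; rewrite conjgE c mulKg. Qed.

Section DicGrp.
Variables (gT : finGroupType) (H : {group gT}) (a b : gT).
Hypotheses (defH : <[a]> <*> <[b]> = H) (a3 : a ^+ 3 = 1) (b4 : b ^+ 4 = 1)
  (ab : a ^ b = a^-1) (H12 : (12 %| #|H|)%N).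

Lemma fix_comm (x y : gT) : commute x y -> x ^ y = x.
Proof. by move=> c; rewrite conjgE c mulKg. Qed.
Lemma comm_fix (x y : gT) : x ^ y = x -> commute x y.
Proof. by move=> e; rewrite /commute -{2}e conjgE mulKVg. Qed.

Lemma aH : a \in H. Proof. by rewrite -defH (subsetP (joing_subl _ _)) ?cycle_id. Qed.
Lemma bH : b \in H. Proof. by rewrite -defH (subsetP (joing_subr _ _)) ?cycle_id. Qed.

Lemma defHM : <[a]> * <[b]> = H.
Proof. by rewrite -defH norm_joinEr // norms_cycle ab groupV cycle_id. Qed.

Lemma orders : [/\ #[a] = 3%N, #[b] = 4%N & <[a]> :&: <[b]> = 1].
Proof.
have h := mul_cardG <[a]> <[b]>; rewrite defHM -!orderE in h.
have oa : (#[a] <= 3)%N by apply: dvdn_leq => //; rewrite order_dvdn a3.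
have ob : (#[b] <= 4)%N by apply: dvdn_leq => //; rewrite order_dvdn b4.
have hH : (12 <= #|H|)%N by apply: dvdn_leq.
have hI : (0 < #|<[a]> :&: <[b]>|)%N by apply: cardG_gt0.
have hab : (#[a] * #[b] <= 12)%N by apply: (leq_mul oa ob).
have h12 : (12 * #|<[a]> :&: <[b]>| <= 12)%N.
  by rewrite (leq_trans (leq_mul hH (leqnn _))) // -h.
have hI1 : #|<[a]> :&: <[b]>| = 1%N by lia.
rewrite hI1 muln1 in h.
have hab2 : (12 <= #[a] * #[b])%N by rewrite h.
split; [nia|nia|]; exact: card1_trivg.
Qed.

Lemma oa : #[a] = 3%N. Proof. by case: orders. Qed.
Lemma ob : #[b] = 4%N. Proof. by case: orders. Qed.

Lemma b2n1 : b ^+ 2 != 1.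
Proof. by apply/eqP => e; have := order_dvdn b 2; rewrite e eqxx ob. Qed.
Lemma an1 : a != 1.
Proof. by apply/eqP => e; have := order_dvdn a 1; rewrite oa expg1 e eqxx. Qed.
Lemma a2n1 : a ^+ 2 != 1.
Proof. by apply/eqP => e; have := order_dvdn a 2; rewrite e eqxx oa. Qed.
Lemma aV2 : a^-1 = a ^+ 2.
Proof. by apply/eqP; rewrite eq_invg_mul -expgS a3. Qed.
Lemma bV3 : b^-1 = b ^+ 3.
Proof. by apply/eqP; rewrite eq_invg_mul -expgS b4. Qed.
Lemma aVna : a^-1 != a.
Proof.
rewrite aV2; apply: contra an1 => /eqP e.
have : a * a = a by rewrite -[RHS]e expgS expg1.
by move/(congr1 (fun x => x * a^-1)); rewrite mulgK mulgV => ->.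
Qed.

Lemma abV : a * b = b * a^-1. Proof. by rewrite -ab conjgE mulKVg. Qed.
Lemma aVb : a^-1 * b = b * a. Proof. by rewrite conjgC conjVg ab invgK. Qed.
Lemma aconjbV : a ^ b^-1 = a^-1.
Proof. by have := conjgK b a; rewrite ab conjVg => e; apply: invg_inj; rewrite e invgK. Qed.
Lemma ba_i i : b * a ^+ i = (a^-1) ^+ i * b.
Proof. by rewrite conjgCV conjXg aconjbV. Qed.
Lemma ncomm_ab : ~ commute a b.
Proof. by move=> /fix_comm; rewrite ab => e; move: aVna; rewrite e eqxx. Qed.
Lemma comm_ab2 : commute a (b ^+ 2).
Proof. by apply: comm_fix; rewrite expgS expg1 conjgM ab conjVg ab invgK. Qed.
Lemma comm_bb2 : commute b (b ^+ 2).
Proof. exact: commuteX. Qed.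

Lemma sq_aib i : (a ^+ i * b) ^+ 2 = b ^+ 2.
Proof.
rewrite expgS expg1 -mulgA [b * (_ * _)]mulgA ba_i !mulgA expgVn mulgV mul1g.
by rewrite expgS expg1.
Qed.

Lemma inv_aib i : (a ^+ i * b)^-1 = a ^+ i * b^-1.
Proof. by rewrite invMg conjgCV invgK conjVg conjXg ab expgVn invgK. Qed.

Lemma elemH h : h \in H -> exists i j, h = a ^+ i * b ^+ j.
Proof.
rewrite -defHM => /mulsgP[x y /cycleP[i ->] /cycleP[j ->] ->]; by exists i, j.
Qed.

Lemma elemH4 h : h \in H -> exists i j, (j < 4)%N /\ h = a ^+ i * b ^+ j.
Proof.
case/elemH=> i [j ->]; exists i, (j %% 4)%N; rewrite ltn_mod /= -{2}ob expg_mod_order.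
by [].
Qed.

Lemma ord34 (x : gT) : x ^+ 3 = 1 -> x ^+ 4 = 1 -> x = 1.
Proof. by move=> h3; rewrite expgSr h3 mul1g. Qed.

Lemma aib3 i : (a ^+ i * b) ^+ 3 != 1.
Proof.
apply/eqP => h3; have h4 : (a ^+ i * b) ^+ 4 = 1 by rewrite (expgM _ 2 2) sq_aib -expgM b4.
by move: (sq_aib i); rewrite (ord34 h3 h4) expg1n => /esym/eqP; rewrite (negbTE b2n1).
Qed.

Lemma a_i_b2 i : commute (a ^+ i) (b ^+ 2).
Proof. exact/commute_sym/commuteX/commute_sym/comm_ab2. Qed.

Lemma E1 h : h \in H -> h ^+ 3 = 1 -> h != 1 -> h = a \/ h = a^-1.
Proof.
case/elemH4=> i [j [lt4 ->]] h3 hn1.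
case: j lt4 h3 hn1 => [|[|[|[|//]]]] _ h3 hn1.
- move: h3 hn1; rewrite expg0 mulg1 -(expg_mod_order a i) oa.
  have : (i %% 3 < 3)%N by rewrite ltn_mod.
  case: (i %% 3)%N => [|[|[|//]]] _ _; rewrite ?expg0 ?eqxx ?expg1 //; first by left.
  by right; rewrite aV2.
- by rewrite expg1 in h3; move: (aib3 i); rewrite h3 eqxx.
- exfalso; move: h3; rewrite (expgMn _ (a_i_b2 i)) expgAC a3 expg1n mul1g -expgM.
  by rewrite -[(2*3)%N]/(4 + 2)%N expgD b4 mul1g; apply/eqP; exact: b2n1.
- move: h3; rewrite -bV3 -inv_aib expgVn => /eqP; rewrite invg_eq1 (negbTE (aib3 i)).
  by [].
Qed.

Lemma ai3 i : (a ^+ i) ^+ 3 = 1. Proof. by rewrite expgAC a3 expg1n. Qed.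

Lemma E2 h : h \in H -> h ^+ 4 = 1 -> h ^+ 2 != 1 ->
  exists i, h = a ^+ i * b \/ h = (a ^+ i * b)^-1.
Proof.
case/elemH4=> i [j [lt4 ->]] h4 h2.
case: j lt4 h4 h2 => [|[|[|[|//]]]] _ h4 h2.
- move: h4 h2; rewrite expg0 mulg1 => h4 h2.
  by move: h2; rewrite (ord34 (ai3 i) h4) expg1n eqxx.
- by exists i; left; rewrite expg1.
- exfalso; move: h4; rewrite (expgMn _ (a_i_b2 i)) expgSr ai3 mul1g -expgM.
  rewrite -[(2*4)%N]/(4 + 4)%N expgD b4 !mulg1 => ai1; move: h2.
  by rewrite ai1 mul1g -expgM b4 eqxx.
- by exists i; right; rewrite inv_aib bV3.
Qed.

Lemma autC f : f \in Aut H ->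
  (f a = a \/ f a = a^-1) /\ exists i, f b = a ^+ i * b \/ f b = (a ^+ i * b)^-1.
Proof.
move=> Af; have inj := injm_autm Af.
have fX x n : x \in H -> f (x ^+ n) = f x ^+ n by move=> Hx; rewrite -(autmE Af) morphX.
have f1 : f 1 = 1 by rewrite -(autmE Af) morph1.
split.
  apply: E1; first exact: Aut_closed aH.
    by rewrite -fX ?aH // a3 f1.
  by rewrite -(autmE Af) morph_injm_eq1 ?aH // an1.
apply: E2; first exact: Aut_closed bH.
  by rewrite -fX ?bH // b4 f1.
by rewrite -fX ?bH // -(autmE Af) morph_injm_eq1 ?groupX ?bH // b2n1.
Qed.

Lemma CA n f : n \in 'N(H) -> f \in Aut H -> a ^ n = f a -> b ^ n = f b ->
  conj_aut H n = f.
Proof.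
move=> nN Af ea eb; apply: (eq_Aut (Aut_aut _ _) Af) => h Hh.
have [i [j eh]] := elemH Hh; rewrite eh in Hh *.
rewrite norm_conj_autE // conjMg !conjXg ea eb -(autmE Af).
by rewrite morphM ?groupX ?aH ?bH // !morphX ?aH ?bH.
Qed.

Lemma kerCA n : n \in 'N(H) -> a ^ n = a -> b ^ n = b -> conj_aut H n = 1.
Proof. by move=> nN ea eb; apply: CA => //; rewrite ?group1 ?perm1. Qed.

Lemma a_conj_al l : a ^ (a ^+ l) = a.
Proof. exact/fix_comm/commuteX. Qed.

Lemma b_conj_a : b ^ a = a * b.
Proof. by rewrite conjgE mulgA aVb abV aV2 expgS expg1 mulgA. Qed.

Lemma b_conj_al l : b ^ (a ^+ l) = a ^+ l * b.
Proof.
elim: l => [|l IH]; first by rewrite expg0 conjg1 mul1g.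
rewrite expgSr conjgM IH conjMg b_conj_a (fix_comm (commute_sym (commuteX l (commute_refl a)))).
by rewrite mulgA -expgSr.
Qed.

Lemma aN : a \in 'N(H). Proof. exact: (subsetP (normG H)) aH. Qed.
Lemma bN : b \in 'N(H). Proof. exact: (subsetP (normG H)) bH. Qed.

Section WithX.
Variable X : gT.
Hypotheses (aX : a ^ X = a) (bX : b ^ X = b^-1).

Lemma XN : X \in 'N(H).
Proof. by apply/normP; rewrite -defH conjYg -!cycleJ aX bX cycleV. Qed.

Definition nn (k m : bool) l := (if k then b else 1) * (if m then X else 1) * a ^+ l.

Lemma nnN k m l : nn k m l \in 'N(H).
Proof.
have hk : (if k then b else 1) \in 'N(H) by case: k; rewrite ?group1 ?bN.
have hm : (if m then X else 1) \in 'N(H) by case: m; rewrite ?group1 ?XN.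
by rewrite /nn !groupM ?groupX ?aN.
Qed.

Lemma nn_a k m l : a ^ nn k m l = (if k then a^-1 else a).
Proof.
by rewrite /nn !conjgM; case: k; case: m; rewrite /= ?conjg1 ?ab ?conjVg ?aX ?a_conj_al.
Qed.

Lemma nn_b k m l : b ^ nn k m l = (if m then (a ^+ l * b)^-1 else a ^+ l * b).
Proof.
rewrite /nn !conjgM (_ : b ^ (if k then b else 1) = b); last by case: k; rewrite ?conjg1 ?fix_comm.
by case: m; rewrite /= ?conjg1 ?bX ?conjVg b_conj_al.
Qed.

Lemma surj f : f \in Aut H -> exists k m l, conj_aut H (nn k m l) = f.
Proof.
move=> Af; have [[fa|fa] [i [fb|fb]]] := autC Af;
  [exists false, false, i | exists false, true, i | exists true, false, i | exists true, true, i];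
  by apply: CA; rewrite ?nnN ?nn_a ?nn_b.
Qed.


Local Notation ca := (conj_aut H).
Lemma caM x y : x \in 'N(H) -> y \in 'N(H) -> ca (x * y) = ca x * ca y.
Proof. by move=> nx ny; rewrite morphM. Qed.

Lemma caE n y : n \in 'N(H) -> y \in H -> ca n y = y ^ n.
Proof. by move=> nN Hy; rewrite norm_conj_autE. Qed.

Lemma ca_aut n : ca n \in Aut H.
Proof. exact: Aut_aut. Qed.

Lemma alpha3 : ca a ^+ 3 = 1.
Proof. by rewrite -morphX ?aN //= a3 morph1. Qed.

Lemma xi2 : ca X ^+ 2 = 1.
Proof.
rewrite -morphX ?XN //=; apply: kerCA; rewrite ?groupX ?XN //.
  by rewrite expgS expg1 conjgM aX aX.
by rewrite expgS expg1 conjgM bX conjVg bX invgK.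
Qed.

Lemma sigma2 : ca b ^+ 2 = 1.
Proof.
rewrite -morphX ?bN //=; apply: kerCA; rewrite ?groupX ?bN //.
  exact/fix_comm/comm_ab2.
exact/fix_comm/comm_bb2.
Qed.

Lemma comm_aX : commute a X.
Proof. exact: comm_fix. Qed.

Lemma comm_alpha_xi : commute (ca a) (ca X).
Proof. by rewrite /commute -!caM ?aN ?XN // comm_aX. Qed.

Lemma comm_xi_sigma : commute (ca X) (ca b).
Proof.
rewrite /commute -!caM ?bN ?XN //; apply: CA; rewrite ?groupM ?XN ?bN ?ca_aut //.
  by rewrite caE ?aH ?groupM ?bN ?XN // !conjgM aX ab conjVg aX.
by rewrite caE ?bH ?groupM ?bN ?XN // !conjgM bX conjVg (fix_comm (commute_refl b)) bX.
Qed.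

Lemma alpha_sigma : ca a ^ ca b = (ca a)^-1.
Proof. by rewrite -morphJ ?aN ?bN //= ab morphV ?aN. Qed.

Definition rho := ca a * ca X.
Definition sigma := ca b.

Lemma rho6 : rho ^+ 6 = 1.
Proof.
rewrite /rho expgMn; last exact: comm_alpha_xi.
by rewrite (expgM (ca a) 3 2) alpha3 (expgM (ca X) 2 3) xi2 !expg1n mulg1.
Qed.

Lemma rho3 : rho ^+ 3 = ca X.
Proof.
rewrite /rho expgMn; last exact: comm_alpha_xi.
by rewrite alpha3 mul1g expgS xi2 mulg1.
Qed.

Lemma rho4 : rho ^+ 4 = ca a.
Proof.
rewrite /rho expgMn; last exact: comm_alpha_xi.
by rewrite expgS alpha3 mulg1 (expgM (ca X) 2 2) xi2 expg1n mulg1.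
Qed.

Lemma rho_sigma : rho ^ sigma = rho^-1.
Proof.
rewrite /rho /sigma conjMg alpha_sigma (fixC comm_xi_sigma) invMg.
have xiV : (ca X)^-1 = ca X by apply/eqP; rewrite eq_invg_mul -expg2 xi2.
rewrite xiV; exact: (commute_sym (commuteV (commute_sym comm_alpha_xi))).
Qed.


Lemma rhoA : rho \in Aut H. Proof. by rewrite groupM ?ca_aut. Qed.
Lemma sigmaA : sigma \in Aut H. Proof. exact: ca_aut. Qed.

Lemma nkN (k : bool) : (if k then b else 1) \in 'N(H).
Proof. by case: k; rewrite ?group1 ?bN. Qed.
Lemma nmN (m : bool) : (if m then X else 1) \in 'N(H).
Proof. by case: m; rewrite ?group1 ?XN. Qed.

Lemma autJ : Aut H = <[rho]> <*> <[sigma]>.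
Proof.
apply/eqP; rewrite eqEsubset; apply/andP; split; last first.
  by rewrite join_subG !cycle_subG rhoA sigmaA.
have rJ : rho \in <[rho]> <*> <[sigma]> := subsetP (joing_subl _ _) _ (cycle_id _).
have sJ : sigma \in <[rho]> <*> <[sigma]> := subsetP (joing_subr _ _) _ (cycle_id _).
apply/subsetP => f Af; have [k [m [l <-]]] := surj Af.
rewrite /nn (caM (groupM (nkN k) (nmN m)) (groupX l aN)) (caM (nkN k) (nmN m)).
rewrite morphX ?aN //= -rho4 !groupM ?groupX //.
  by case: k; rewrite ?morph1 ?group1.
by case: m; rewrite ?morph1 ?group1 // -rho3 groupX.
Qed.

Lemma rho_a : rho a = a.
Proof.
by rewrite /rho permM (caE aN aH) (fixC (commute_refl a)) (caE XN aH) aX.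
Qed.

Lemma sigma_notin : sigma \notin <[rho]>.
Proof.
apply/negP => /cycleP[k ek].
have : sigma a = a by rewrite ek permX_fix // rho_a.
by rewrite /sigma caE ?aH ?bN // ab => e; move: aVna; rewrite e eqxx.
Qed.

Lemma ord_rho : #[rho] = 6%N.
Proof.
have d6 : (#[rho] %| 6)%N by rewrite order_dvdn rho6.
have n2 : ~~ (#[rho] %| 2)%N.
  rewrite order_dvdn /rho expgMn; last exact: comm_alpha_xi.
  rewrite xi2 mulg1 -morphX ?aN //=; apply/eqP => e.
  have : ca (a ^+ 2) b = b by rewrite e perm1.
  rewrite caE ?bH ?groupX ?aN // b_conj_al => /(congr1 (fun x => x * b^-1)).
  by rewrite mulgK mulgV => e2; move: a2n1; rewrite e2 eqxx.
have n3 : ~~ (#[rho] %| 3)%N.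
  rewrite order_dvdn rho3; apply/eqP => e.
  have : ca X b = b by rewrite e perm1.
  rewrite caE ?bH ?XN // bX => e2; move: b2n1.
  by rewrite expgS expg1 -{1}e2 mulVg eqxx.
have := @dvdn_leq _ 6 isT d6; move: d6 n2 n3.
by case: #[rho] => [|[|[|[|[|[|[|]]]]]]].
Qed.

Lemma homG : Aut H \homg Grp (x : y : x ^+ 6, y ^+ 2, x ^ y = x^-1).
Proof.
apply/existsP; exists (rho, sigma); rewrite /= !xpair_eqE -autJ eqxx rho6 /sigma sigma2.
by rewrite -/sigma rho_sigma !eqxx.
Qed.

Lemma autD12 : Aut H \isog 'D_12.
Proof.
have isoD := @Grp_dihedral 6 isT.
apply/(isoGrpP _ isoD); split; last exact: homG.
rewrite (@card_dihedral 6 isT).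
have h12 : (#|Aut H| %| 12)%N.
  by have := homG; rewrite -(isoD _ (Aut H)%G) => /card_homg; rewrite (@card_dihedral 6 isT).
have h6 : (6 %| #|Aut H|)%N by rewrite -ord_rho orderE cardSg // cycle_subG rhoA.
have hlt : (6 < #|Aut H|)%N.
  rewrite -ord_rho orderE; apply: proper_card; apply/properP; split.
    by rewrite cycle_subG rhoA.
  by exists sigma; rewrite ?sigmaA ?sigma_notin.
have := @dvdn_leq _ 12 isT h12; move: h12 h6 hlt.
by case: #|Aut H| => [|[|[|[|[|[|[|[|[|[|[|[|[|]]]]]]]]]]]]].
Qed.

End WithX.
End DicGrp.

Unset Implicit Arguments.

Lemma H12 (gT : finGroupType) (H : {group gT})
    (isoH : H \isog Grp (a : b : (a ^+ 3, b ^+ 4, a ^ b = a^-1))) : (12 %| #|H|)%N.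
Proof.
have isoE := @Grp_ext_dihedral 3 isT 4 isT isT.
have := isoGrp_hom isoE; rewrite -(isoH _ [set: _]%G) => /card_homg.
by rewrite (@card_ext_dihedral 3 isT 4 isT isT).
Qed.

Lemma ext (gT : finGroupType) (H : {group gT})
    (isoH : H \isog Grp (a : b : (a ^+ 3, b ^+ 4, a ^ b = a^-1))) :
  exists a b : gT, [/\ <[a]> <*> <[b]> = H, a ^+ 3 = 1, b ^+ 4 = 1 & a ^ b = a^-1].
Proof.
have := isoGrp_hom isoH; case/existsP => -[a b] /=; rewrite !xpair_eqE.
case/and4P => /eqP ? /eqP ? /eqP ? /eqP ?; by exists a, b.
Qed.

Lemma GLX (p : nat) (u : {'GL_2['F_p]}) n : GLval (u ^+ n) = (GLval u ^+ n)%R.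
Proof. by elim: n => [|n IH]; rewrite ?expg0 ?expr0 // expgS GRing.exprS GL_ME IH. Qed.

Theorem lemma4p4 (p : nat) (pr_p : prime p) (p_ge5 : (5 <= p)%N)
    (H : {group {'GL_2['F_p]}})
    (isoH : H \isog Grp (a : b : (a ^+ 3, b ^+ 4, a ^ b = a^-1))) :
  [/\ (* the conjugation morphism N_G(H) -> Aut(H) is onto, with kernel C(G),
         hence induces N_G(H)/C(G) ~ Aut(H) *)
      [/\ conj_aut H @* 'N_('GL_2(p))(H) = Aut H,
          'ker_('N_('GL_2(p))(H)) (conj_aut H) = 'Z('GL_2(p))
        & 'N_('GL_2(p))(H) / 'Z('GL_2(p)) \isog Aut H],
      Aut H \isog 'D_12,
      legendre p 3 = 1%R ->
        forall x, x \in 'N_('GL_2(p))(H) -> sq_det x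
    & legendre p 3 = (-1)%R ->
        forall x, x \in 'N_('GL_2(p))(H) -> (sq_det x <-> induces_inner H x)].
Proof.
have [a [b [defH a3 b4 ab]]] := @ext _ _ isoH.
have h12 := @H12 _ _ isoH.
have aH' := aH defH; have bH' := bH defH.
pose A := GLval a; pose Ai := GLval a^-1; pose B := GLval b; pose Bi := GLval b^-1.
have hAAi : (A * Ai = 1)%R by rewrite /A /Ai -GL_ME mulgV.
have hAiA : (Ai * A = 1)%R by rewrite /A /Ai -GL_ME mulVg.
have hBiB : (Bi * B = 1)%R by rewrite /B /Bi -GL_ME mulVg.
have hAB : (A * B = B * Ai)%R by rewrite /A /B /Ai -!GL_ME (abV ab).
have hAiB : (Ai * B = B * A)%R by rewrite /A /B /Ai -!GL_ME (aVb ab).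
have hA3 : (A ^+ 3 = 1)%R by rewrite /A -GLX a3.
have hB4 : (B ^+ 4 = 1)%R by rewrite /B -GLX b4.
have hB2 : (B ^+ 2 != 1)%R.
  rewrite /B -GLX; apply: contra (b2n1 defH a3 b4 ab h12) => /eqP e; apply/eqP; exact: val_inj.
have nAB : (A * B != B * A)%R.
  apply/eqP => e; apply: (ncomm_ab defH a3 b4 ab h12); apply: val_inj; change (GLval (a * b) = GLval (b * a)); rewrite !GL_ME; exact: e.
have BBe := BB hAB hAiB hB4 hB2 nAB.
have XAe := XA A.
have XBe := XB hAAi hAiA hAB hAiB hA3 nAB.
have dX := detX hAAi hAiA hAB hAiB hA3 nAB.
have [_ dA] := trdetA hAAi hAiA hAB hAiB hA3 nAB.
have dB := detB hAB hAiB hB4 hB2 nAB.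
have p3 : ((3%:R : 'F_p) != 0)%R.
  by rewrite -(dvdn_pcharf (pchar_Fp pr_p)); apply/negP => /(@dvdn_leq _ 3 isT); lia.
have Xu : (Xm A \is a GRing.unit)%R by rewrite unitmxE dX unitfE.
pose X : {'GL_2['F_p]} := FinRing.unit _ Xu.
have XvE : GLval X = Xm A by [].
have aX : a ^ X = a.
  apply: (@fixC _ a X); apply: val_inj; change (GLval (a * X) = GLval (X * a)).
  by rewrite !GL_ME XvE XAe.
have BiE : Bi = (- B)%R.
  have e1 : (B * - B = 1)%R by rewrite GRing.mulrN BBe -scalemx1 scaleN1r opprK.
  by rewrite -[Bi]GRing.mulr1 -e1 GRing.mulrA hBiB GRing.mul1r.
have bX : b ^ X = b^-1.
  have e : b * X = X * b^-1.
    apply: val_inj; change (GLval (b * X) = GLval (X * b^-1)).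
    by rewrite !GL_ME XvE -/Bi BiE GRing.mulrN XBe opprK.
  by rewrite conjgE e mulKg.
have cent_scal x : commute x a -> commute x b -> is_scal (GLval x).
  move=> cxa cxb; apply: (scal_comm_AB nAB); [change (GLval (x * a) = GLval (a * x)) | change (GLval (x * b) = GLval (b * x))]; congr GLval; [exact: cxa | exact: cxb].
have scal_cent (x : {'GL_2['F_p]}) : is_scal (GLval x) -> x \in 'C([set: {'GL_2['F_p]}]).
  move=> sx; apply/centP => y _; apply: val_inj.
  change (GLval (x * y) = GLval (y * x)); rewrite !GL_ME; exact: (scalP _ sx).
have NE : 'N_('GL_2(p))(H) = 'N(H) by rewrite /GLgroup setTI.
have ZE : 'Z('GL_2(p)) = 'C([set: {'GL_2['F_p]}]) by rewrite /GLgroup /center setTI.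
have kerE : 'ker_('N_('GL_2(p))(H)) (conj_aut H) = 'Z('GL_2(p)).
  rewrite ker_conj_aut NE ZE; apply/eqP; rewrite eqEsubset; apply/andP; split; apply/subsetP => x.
    case/setIP => _ cHx; apply: scal_cent; apply: cent_scal.
      exact: (centP cHx).
    exact: (centP cHx).
  move=> cGx; have cHx : x \in 'C(H) := subsetP (centS (subsetT H)) x cGx.
  by apply/setIP; split => //; apply: (subsetP (cent_sub H)).
have imE : conj_aut H @* 'N_('GL_2(p))(H) = Aut H.
  apply/eqP; rewrite eqEsubset Aut_conj_aut /=; apply/subsetP => f Af.
  have [k [m [l <-]]] := surj defH a3 b4 ab h12 aX bX Af.
  by apply: mem_morphim; rewrite ?NE ?(nnN defH aX bX).
have isoN : 'N_('GL_2(p))(H) / 'Z('GL_2(p)) \isog Aut H.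
  have := first_isog_loc (conj_aut H) (subsetIr _ _ : 'N_('GL_2(p))(H) \subset 'N(H)).
  by rewrite kerE imE.
have decomp x : x \in 'N_('GL_2(p))(H) -> exists k m l z,
    z \in 'C([set: {'GL_2['F_p]}]) /\ x = z * nn a b X k m l.
  move=> Nx; rewrite NE in Nx.
  have Af : conj_aut H x \in Aut H := Aut_aut _ _.
  have [k [m [l e]]] := surj defH a3 b4 ab h12 aX bX Af.
  have Nn : nn a b X k m l \in 'N(H) := nnN defH aX bX k m l.
  exists k, m, l, (x * (nn a b X k m l)^-1); split; last by rewrite mulgKV.
  have : x * (nn a b X k m l)^-1 \in 'ker (conj_aut H).
    apply/kerP; first by rewrite groupM ?groupV.
    by rewrite morphM ?groupV // morphV //= e mulgV.
  rewrite ker_conj_aut => cHz; apply: scal_cent; apply: cent_scal.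
    exact: (centP cHz).
  exact: (centP cHz).
have dal l : (\det (GLval (a ^+ l)) = 1)%R.
  rewrite GLX; elim: l => [|l IH]; first by rewrite GRing.expr0 det1.
  by rewrite GRing.exprS detM IH -/A dA GRing.mulr1.
have dbl l : (\det (GLval (b ^+ l)) = 1)%R.
  rewrite GLX; elim: l => [|l IH]; first by rewrite GRing.expr0 det1.
  by rewrite GRing.exprS detM IH -/B dB GRing.mulr1.
have detnn k m l : (\det (GLval (nn a b X k m l)) = if m then 3%:R else 1)%R.
  rewrite /nn !GL_ME !detM dal GRing.mulr1.
  by case: k; case: m; rewrite ?GL_1E ?det1 ?XvE ?dX -?/B ?dB ?GRing.mul1r.
have detz z : z \in 'C([set: {'GL_2['F_p]}]) -> exists c, (\det (GLval z) = c ^+ 2)%R /\ (c != 0)%R.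
  move=> cz; have [c ec] : is_scal (GLval z).
    by apply: cent_scal; apply: (centP cz); rewrite in_setT.
  exists c; rewrite ec det_scalar; split => //.
  by have := GL_det z; rewrite ec det_scalar expf_eq0.
have p3n : (p %| 3)%N = false by apply/negP => /(@dvdn_leq _ 3 isT); lia.
have hl1 : legendre p 3 = 1%R -> exists y : 'F_p, (y ^+ 2 = 3%:R)%R.
  rewrite /legendre p3n /=; case: ifP => [/existsP[y /eqP ey] _ | //]; by exists y.
have hlm1 : legendre p 3 = (-1)%R -> forall y : 'F_p, (y ^+ 2 != 3%:R)%R.
  rewrite /legendre p3n /=; case: ifP => [// | ne _ y]; apply/negP => e.
  have : [exists y0 : 'F_p, (y0 ^+ 2 == 3%:R)%R] by apply/existsP; exists y.
  by rewrite ne.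
split; [by split | exact: (autD12 defH a3 b4 ab h12 aX bX) | |].
- move=> /hl1 [y ey] x Nx; have [k [m [l [z [cz ->]]]]] := decomp x Nx.
  have [c [dz _]] := detz z cz.
  rewrite /sq_det GL_ME detM dz detnn.
  by case: m; [exists (c * y)%R; rewrite GRing.exprMn ey | exists c; rewrite GRing.mulr1].
move=> /hlm1 nsq x Nx; split.
  move=> [y ey]; have [k [m [l [z [cz ex]]]]] := decomp x Nx.
  have [c [dz cn0]] := detz z cz.
  case: m ex => ex.
    exfalso; move: (nsq (y / c)%R); rewrite GRing.expr_div_n -ey ex GL_ME detM dz detnn /=.
    by rewrite GRing.mulrAC GRing.divff ?GRing.mul1r ?eqxx // expf_neq0.
  exists (nn a b X k false l).
    rewrite /nn /= mulg1 groupM ?groupX //.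
    by case: (k); rewrite ?group1.
  move=> w Hw; rewrite ex conjgM (@fixC _ w z) //.
  by apply: commute_sym; apply: (centP cz); rewrite in_setT.
case=> h Hh eh.
have ea : a ^ (x * h^-1) = a by rewrite conjgM eh // conjgK.
have eb : b ^ (x * h^-1) = b by rewrite conjgM eh // conjgK.
have [c ec] : is_scal (GLval (x * h^-1)).
  by apply: cent_scal; apply: commute_sym; apply: comm_fix.
have [i [j ehij]] := elemH defH ab Hh.
exists c; rewrite -(mulgKV h x) GL_ME detM ec det_scalar ehij GL_ME detM dal dbl.
by rewrite !GRing.mulr1.
Qed.
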